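(* Assume the standing setting (A1)–(A7) described in the context. For sufficiently small $h>0$ and $i\in\{1,2,3,4\}$, let $\bar x_i(h)$ be the abscissa of the unique intersection point of the graph of $g_i$ with $\partial B(h)$, and let $B_h(x):=\sqrt{(a-h)^2-x^2}$. Let $\eta_i(h)\in[0,2\pi)$ be the polar angle of the point $(\bar x_i(h),B_h(\bar x_i(h)))$ if $i\in\{1,2\}$ and of the point $(\bar x_i(h),-B_h(\bar x_i(h)))$ if $i\in\{3,4\}$, and put $\gamma_1(h)=\eta_1(h)$, $\gamma_2(h)=\pi-\eta_2(h)$, $\gamma_3(h)=\eta_3(h)-\pi$, $\gamma_4(h)=2\pi-\eta_4(h)$. Then for each $i\in\{1,2,3,4\}$, $\gamma_i(h)\sim\tau_i h^{1/2}$ as $h\to0$, where $\tau_i=\frac{3}{2a}c_i$ and $c_i=\frac{2q_i\sqrt{2a}}{3\sqrt{4-q_i^2}}$.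
   Context: Standing setting. $f$ is a Lebesgue density on $\mathbb{R}^2$ with compact support $E\subset\mathbb{R}^2$. $|\cdot|$ is the Euclidean norm, $\lambda^2$ Lebesgue measure, $A^\circ$ the interior, $\partial A$ the boundary, $\mathrm{diam}(A)=\sup\{|x-y|:x,y\in A\}$. For $0\le h<a$, $B(h)=\{z\in\mathbb{R}^2:|z|\le a-h\}$; $U(x,\varepsilon)=\{z:|z-(x,0)|<\varepsilon\}$; $Q_1,\dots,Q_4$ are the open quadrants, $Q_1=\{x>0,y>0\}$, numbered anticlockwise; $E_i:=E\cap Q_i$; $f_a(x)=\sqrt{a^2-x^2}/2$. Assumptions: (A1) $a>0$, $\mathrm{diam}(E)=2a$, $\inf\{x:(x,y)\in E\}=-a$, $\sup\{x:(x,y)\in E\}=a$. (A2) For each $\varepsilon>0$, $\mathrm{diam}(E\setminus(U(-a,\varepsilon)\cup U(a,\varepsilon)))<2a$. (A3) For each $\varepsilon>0$, $\lambda^2(E_i\cap U(a,\varepsilon))>0$ for $i\in\{1,4\}$, $\lambda^2(E_j\cap U(-a,\varepsilon))>0$ for $j\in\{2,3\}$. (A4) There are $\nu\in[0,a)$ and continuous $g_1:[\nu,a]\to[0,\infty)$, $g_4:[\nu,a]\to(-\infty,0]$, $g_1(a)=g_4(a)=0$, with $E^\circ\cap\{x>\nu\}=\{(x,y):\nu<x<a,\ g_4(x)<y<g_1(x)\}$, and continuous $g_2:[-a,-\nu]\to[0,\infty)$, $g_3:[-a,-\nu]\to(-\infty,0]$, $g_2(-a)=g_3(-a)=0$, with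 $E^\circ\cap\{x<-\nu\}=\{(x,y):-a<x<-\nu,\ g_3(x)<y<g_2(x)\}$. (A5) Constants $q_1,\dots,q_4\in(0,2)$ with $g_1/f_a\to q_1$, $-g_4/f_a\to q_4$ as $x\to a$ and $g_2/f_a\to q_2$, $-g_3/f_a\to q_3$ as $x\to-a$. (A6) For each $i$ and sufficiently small $h>0$: $E_i^\circ\cap\{|x|<\nu\}\subset B(h)$, and the graph of $g_i$ meets $\partial B(h)$ in exactly one point. (A7) For small $\varepsilon>0$, $f$ is continuous on $E\cap U(\pm a,\varepsilon)$, and $f((a,0))>0$, $f((-a,0))>0$. $g(h)\sim k(h)$ means $g(h)/k(h)\to1$. *)

(* Defs.v *)
From HB Require Import structures.
From mathcomp Require Import all_boot all_order all_algebra.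
From mathcomp Require Import all_classical all_reals all_analysis.
Set Implicit Arguments. Unset Strict Implicit. Unset Printing Implicit Defensive.
Import Order.TTheory GRing.Theory Num.Theory.
Import numFieldNormedType.Exports.
Local Open Scope classical_set_scope.
Local Open Scope ring_scope.

Section Defs.
Variable R : realType.
Implicit Types (z w : R * R) (a h x eps nu : R).

Definition lambda2 := ((@lebesgue_measure R) \x (@lebesgue_measure R))%E.

Definition eucl z : R := Num.sqrt (z.1 ^+ 2 + z.2 ^+ 2).
Definition edist z w : R := Num.sqrt ((z.1 - w.1) ^+ 2 + (z.2 - w.2) ^+ 2).

Definition diam (A : set (R * R)) : R :=
  sup [set d | exists z w, A z /\ A w /\ d = edist z w].

Definition bdry (A : set (R * R)) : set (R * R) := closure A `\` interior A.

Definition Bdisk a h : set (R * R) := [set z | eucl z <= a - h].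
Definition Uball x eps : set (R * R) := [set z | edist z (x, 0) < eps].
Definition Q1 : set (R * R) := [set z | 0 < z.1 /\ 0 < z.2].
Definition Q2 : set (R * R) := [set z | z.1 < 0 /\ 0 < z.2].
Definition Q3 : set (R * R) := [set z | z.1 < 0 /\ z.2 < 0].
Definition Q4 : set (R * R) := [set z | 0 < z.1 /\ z.2 < 0].

Definition fa a x : R := Num.sqrt (a ^+ 2 - x ^+ 2) / 2.

Definition graph (g : R -> R) (lo hi : R) : set (R * R) :=
  [set z | lo <= z.1 <= hi /\ z.2 = g z.1].

Definition is_density (f : R * R -> R) :=
  measurable_fun setT f /\ (forall z, 0 <= f z) /\
  (\int[lambda2]_z (f z)%:E = 1)%E.

Definition support (f : R * R -> R) : set (R * R) :=
  [set z | forall e : R, 0 < e ->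
     (0 < \int[lambda2]_(w in [set w | (edist w z < e)%R]) (f w)%:E)%E].

Definition standing (f : R * R -> R) (E : set (R * R)) (a nu : R)
  (g1 g2 g3 g4 : R -> R) (q1 q2 q3 q4 : R) : Prop :=
  [/\ is_density f, E = support f & compact E] /\
  [/\ 0 < a, diam E = 2 * a,
      inf [set x | exists y, E (x, y)] = - a &
      sup [set x | exists y, E (x, y)] = a] /\
  (forall eps, 0 < eps ->
     diam (E `\` (Uball (- a) eps `|` Uball a eps)) < 2 * a) /\
  (forall eps, 0 < eps ->
     [/\ (0 < lambda2 (E `&` Q1 `&` Uball a eps))%E,
         (0 < lambda2 (E `&` Q4 `&` Uball a eps))%E,
         (0 < lambda2 (E `&` Q2 `&` Uball (- a) eps))%E &
         (0 < lambda2 (E `&` Q3 `&` Uball (- a) eps))%E]) /\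
  [/\ 0 <= nu /\ nu < a,
      ({within `[nu, a]%classic, continuous g1}) /\ ({within `[nu, a]%classic, continuous g4}),
      (forall x, nu <= x <= a -> 0 <= g1 x /\ g4 x <= 0),
      g1 a = 0 /\ g4 a = 0 &
      interior E `&` [set z | nu < z.1] =
        [set z | nu < z.1 < a /\ g4 z.1 < z.2 < g1 z.1]] /\
  [/\ ({within `[- a, - nu]%classic, continuous g2}) /\ ({within `[- a, - nu]%classic, continuous g3}),
      (forall x, - a <= x <= - nu -> 0 <= g2 x /\ g3 x <= 0),
      g2 (- a) = 0 /\ g3 (- a) = 0 &
      interior E `&` [set z | z.1 < - nu] =
        [set z | - a < z.1 < - nu /\ g3 z.1 < z.2 < g2 z.1]] /\
  [/\ [/\ 0 < q1 < 2, 0 < q2 < 2, 0 < q3 < 2 & 0 < q4 < 2],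
      (fun x => g1 x / fa a x) @ a^'- --> q1,
      (fun x => - g4 x / fa a x) @ a^'- --> q4,
      (fun x => g2 x / fa a x) @ (- a)^'+ --> q2 &
      (fun x => - g3 x / fa a x) @ (- a)^'+ --> q3] /\
  (\forall h \near 0^'+,
     [/\ interior (E `&` Q1) `&` [set z | `|z.1| < nu] `<=` Bdisk a h,
         interior (E `&` Q2) `&` [set z | `|z.1| < nu] `<=` Bdisk a h,
         interior (E `&` Q3) `&` [set z | `|z.1| < nu] `<=` Bdisk a h &
         interior (E `&` Q4) `&` [set z | `|z.1| < nu] `<=` Bdisk a h] /\
     [/\ exists! p, (graph g1 nu a `&` bdry (Bdisk a h)) p,
         exists! p, (graph g2 (- a) (- nu) `&` bdry (Bdisk a h)) p,
         exists! p, (graph g3 (- a) (- nu) `&` bdry (Bdisk a h)) p &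
         exists! p, (graph g4 nu a `&` bdry (Bdisk a h)) p]) /\
  (\forall eps \near 0^'+,
     ({within E `&` Uball a eps, continuous f}) /\
     ({within E `&` Uball (- a) eps, continuous f})) /\
  0 < f (a, 0) /\ 0 < f (- a, 0).

Definition xbar (g : R -> R) (lo hi a h : R) : R :=
  xget 0 [set x | (graph g lo hi `&` bdry (Bdisk a h)) (x, g x)].

Definition Bh a h x : R := Num.sqrt ((a - h) ^+ 2 - x ^+ 2).

Definition polar_angle z : R :=
  xget 0 [set t | 0 <= t < 2 * pi /\ z.1 = eucl z * cos t /\ z.2 = eucl z * sin t].

Definition eta_up (g : R -> R) lo hi a h : R :=
  let x := xbar g lo hi a h in polar_angle (x, Bh a h x).
Definition eta_down (g : R -> R) lo hi a h : R :=
  let x := xbar g lo hi a h in polar_angle (x, - Bh a h x).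

Definition cconst (q a : R) : R :=
  2 * q * Num.sqrt (2 * a) / (3 * Num.sqrt (4 - q ^+ 2)).
Definition tau (q a : R) : R := 3 / (2 * a) * cconst q a.

End Defs.

(* Main.v *)
Require Import Defs.
From HB Require Import structures.
From mathcomp Require Import all_boot all_order all_algebra.
From mathcomp Require Import all_classical all_reals all_analysis.
Import Order.TTheory GRing.Theory Num.Theory.
Import numFieldNormedType.Exports.
Local Open Scope classical_set_scope.
Local Open Scope ring_scope.
From mathcomp Require Import ring lra.


Section Trig.
Variable R : realType.
Implicit Types (t u x y r s : R).

Lemma sin_pos_lt_pi t : 0 <= t < 2 * pi -> 0 < sin t -> t < pi.
Proof.
move=> /andP[t0 t2] st; rewrite ltNge; apply/negP => tp.
have : 0 <= sin (t - pi).
  apply: sin_ge0_pi; apply/andP; split; lra.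
have -> : sin (t - pi) = - sin t.
  by rewrite sinB sinpi cospi; lra.
lra.
Qed.

Lemma sin_neg_ge_pi t : 0 <= t < 2 * pi -> sin t < 0 -> pi <= t.
Proof.
move=> /andP[t0 t2] st; rewrite leNgt; apply/negP => tp.
have : 0 <= sin t by apply: sin_ge0_pi; apply/andP; split; lra.
lra.
Qed.

Lemma angle_uniq t t' : 0 <= t < 2 * pi -> 0 <= t' < 2 * pi ->
  cos t = cos t' -> 0 < sin t * sin t' -> t = t'.
Proof.
move=> ht ht' ec sp.
have [s0|s0] := ltP 0 (sin t).
  have s0' : 0 < sin t' by rewrite -(pmulr_rgt0 _ s0).
  have l1 := sin_pos_lt_pi _ ht s0; have l2 := sin_pos_lt_pi _ ht' s0'.
  case/andP: ht => ? ?; case/andP: ht' => ? ?.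
  apply: cos_inj => //; rewrite in_itv /=; apply/andP; split; lra.
have s1 : sin t < 0.
  rewrite lt_neqAle s0 andbT; apply/negP => /eqP e; move: sp; rewrite e mul0r ltxx //.
have s1' : sin t' < 0.
  by rewrite -(nmulr_rgt0 _ s1).
have l1 := sin_neg_ge_pi _ ht s1; have l2 := sin_neg_ge_pi _ ht' s1'.
case/andP: ht => ? ?; case/andP: ht' => ? ?.
suff : t - pi = t' - pi by lra.
apply: cos_inj; rewrite ?in_itv /=; try (apply/andP; split; lra).
by rewrite !cosB sinpi !mulr0 ec.
Qed.


Lemma eucl_r x y r : 0 <= r -> x ^+ 2 + y ^+ 2 = r ^+ 2 -> eucl (x, y) = r.
Proof. by move=> r0 H; rewrite /eucl /= H sqrtr_sqr ger0_norm. Qed.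

Lemma polar_gen x y t0 : y != 0 -> 0 <= t0 < 2 * pi ->
  x = eucl (x, y) * cos t0 -> y = eucl (x, y) * sin t0 -> polar_angle (x, y) = t0.
Proof.
move=> y0 ht0 hx hy; rewrite /polar_angle; apply: xget_unique => //= t [ht [hx' hy']].
have e0 : eucl (x, y) != 0.
  by apply/negP => /eqP e; move: y0; rewrite hy e mul0r eqxx.
have s0 : sin t0 != 0.
  by apply/negP => /eqP e; move: y0; rewrite hy e mulr0 eqxx.
have ec : cos t = cos t0 by apply: (mulfI e0); rewrite -hx -hx'.
have es : sin t = sin t0 by apply: (mulfI e0); rewrite -hy -hy'.
apply: angle_uniq => //; rewrite es.
by rewrite -expr2 exprn_even_gt0 //=.
Qed.

Lemma asin_facts s : 0 < s < 1 ->
  [/\ 0 < asin s, asin s < pi / 2, sin (asin s) = s &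
      cos (asin s) = Num.sqrt (1 - s ^+ 2)].
Proof.
move=> /andP[s0 s1].
have sB : -1 <= s <= 1 by apply/andP; split; lra.
have hs : sin (asin s) = s by rewrite asinK // in_itv /=.
have lo := asin_geNpi2 sB; have hi := asin_ltpi2 (x:=s) ltac:(apply/andP; split; lra).
split => //; last by rewrite cos_asin.
rewrite ltNge; apply/negP => u0.
have : 0 <= sin (- asin s).
  apply: sin_ge0_pi; apply/andP; split; first lra.
  have := @pi_gt0 R; lra.
rewrite sinN hs; lra.
Qed.

Lemma X_eq r s X : 0 < r -> 0 < X -> X ^+ 2 + (r * s) ^+ 2 = r ^+ 2 ->
  X = r * Num.sqrt (1 - s ^+ 2).
Proof.
move=> r0 X0 H.
have -> : 1 - s ^+ 2 = X ^+ 2 / r ^+ 2.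
  apply: (mulIf (x := r ^+ 2)); first by rewrite expf_neq0 // gt_eqF.
  rewrite mulfVK ?expf_neq0 ?gt_eqF //.
  have HX : X ^+ 2 = r ^+ 2 - (r * s) ^+ 2 by rewrite -H; ring.
  rewrite HX exprMn; ring.
rewrite sqrtrM ?sqr_ge0 // sqrtr_sqr ger0_norm ?ltW //.
rewrite sqrtrV ?sqr_ge0 // sqrtr_sqr ger0_norm ?ltW //.
by rewrite mulrCA mulfV ?gt_eqF // mulr1.
Qed.


Lemma polar_cases r s X : 0 < r -> 0 < s < 1 -> 0 < X ->
  X ^+ 2 + (r * s) ^+ 2 = r ^+ 2 ->
  [/\ polar_angle (X, r * s) = asin s,
      polar_angle (- X, r * s) = pi - asin s,
      polar_angle (- X, - (r * s)) = pi + asin s &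
      polar_angle (X, - (r * s)) = 2 * pi - asin s].
Proof.
move=> r0 hs X0 H.
have [u0 upi su cu] := asin_facts _ hs.
have eX := X_eq _ _ _ r0 X0 H.
have pi0 := @pi_gt0 R.
case/andP: (hs) => s0 s1.
have rs0 : r * s != 0 by rewrite mulf_neq0 ?gt_eqF.
have rs0' : - (r * s) != 0 by rewrite oppr_eq0.
have E1 : eucl (X, r * s) = r by rewrite (eucl_r _ _ _ (ltW r0) H).
have E2 : eucl (- X, r * s) = r by rewrite (eucl_r _ _ _ (ltW r0)) // sqrrN.
have E3 : eucl (- X, - (r * s)) = r by rewrite (eucl_r _ _ _ (ltW r0)) // !sqrrN.
have E4 : eucl (X, - (r * s)) = r by rewrite (eucl_r _ _ _ (ltW r0)) // !sqrrN.
have c2pi : cos (2 * pi) = 1 :> R by rewrite mulr_natl cos2pi.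
have s2pi : sin (2 * pi) = 0 :> R by rewrite mulr_natl sin2pi.
split.
- apply: polar_gen => //; first (apply/andP; split; lra).
  + by rewrite E1 cu.
  + by rewrite E1 su.
- apply: polar_gen => //; first (apply/andP; split; lra).
  + by rewrite E2 cosB cospi sinpi cu eX; ring.
  + by rewrite E2 sinB cospi sinpi su; ring.
- apply: polar_gen => //; first (apply/andP; split; lra).
  + by rewrite E3 cosD cospi sinpi cu eX; ring.
  + by rewrite E3 sinD cospi sinpi su; ring.
- apply: polar_gen => //; first (apply/andP; split; lra).
  + by rewrite E4 cosB c2pi s2pi cu eX; ring.
  + by rewrite E4 sinB c2pi s2pi su; ring.
Qed.

End Trig.

Lemma abs_le_eucl (R : realType) (z : R * R) : `|z.1| <= eucl z /\ `|z.2| <= eucl z.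
Proof.
have h1 := sqr_ge0 z.1; have h2 := sqr_ge0 z.2.
rewrite /eucl -!sqrtr_sqr; split; rewrite ler_sqrt ?addr_ge0 //; lra.
Qed.

Lemma circle_bdry (R : realType) (a h : R) (z : R * R) :
  h < a -> eucl z = a - h -> bdry (Bdisk a h) z.
Proof.
move=> ha ez; split.
  by apply: subset_closure; rewrite /Bdisk /= ez.
rewrite /interior /= => /nbhs_ballP [e e0 He].
set r := a - h.
have r0 : 0 < r by rewrite subr_gt0.
have e0' : 0 < e by [].
set d := e / (2 * (r + 1)).
have d0 : 0 < d by rewrite divr_gt0 //; lra.
have dr : d * r < e.
  have rr : 0 < 2 * (r + 1) by lra.
  rewrite /d mulrAC ltr_pdivrMr //; nra.
have := He ((1 + d) * z.1, (1 + d) * z.2).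
rewrite /ball /= /prod_ball /=. rewrite -!ball_normE /ball_ /=.
have [z1 z2] := abs_le_eucl _ z; rewrite ez -/r in z1 z2.
have E1 : forall x : R, x - (1 + d) * x = - (d * x) by move=> x; ring.
have N : forall x : R, `|d * x| = d * `|x| by move=> x; rewrite normrM gtr0_norm.
rewrite !E1 !normrN !N.
move=> /(_ (conj _ _)) H; have := H ltac:(nra) ltac:(nra).
rewrite /Bdisk /eucl /=.
have -> : ((1 + d) * z.1) ^+ 2 + ((1 + d) * z.2) ^+ 2 = (1 + d) ^+ 2 * (z.1 ^+ 2 + z.2 ^+ 2)
  by ring.
rewrite sqrtrM ?sqr_ge0 // sqrtr_sqr -/(eucl z) ez -/r.
rewrite ger0_norm; last lra.
nra.
Qed.


Lemma asin_quot (R : realType) :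
  (fun h : R => h^-1 * asin h) @ 0^' --> (1:R).
Proof.
have D : is_derive (0:R) 1 asin ((Num.sqrt (1 - 0 ^+ 2))^-1).
  by apply: is_derive1_asin; rewrite ltrN10 ltr01.
have e1 : (Num.sqrt (1 - 0 ^+ 2))^-1 = 1 :> R by rewrite expr0n subr0 sqrtr1 invr1.
rewrite e1 in D.
have := @ex_derive _ _ _ _ _ _ _ D.
rewrite /derivable => /cvg_ex [l Hl].
have : 'D_1 asin 0 = l by rewrite /derive; apply: cvg_lim.
rewrite (@derive_val _ _ _ _ _ _ _ D) => E; rewrite -E in Hl.
apply: cvg_trans Hl; apply: near_eq_cvg; near=> h.
have a0 : asin (0:R) = 0.
  rewrite -{1}sin0 sinK // in_itv /= oppr_le0 divr_ge0 ?pi_ge0 //.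
by rewrite /= addr0 a0 subr0 /GRing.scale /= mulr1.
Unshelve. all: by end_near. Qed.

Lemma to_dnbhs (R : realType) (T : Type) (F : set_system T) (FF : Filter F) (s : T -> R) :
  s @ F --> 0 -> (\forall h \near F, s h != 0) -> s @ F --> (0:R)^'.
Proof.
move=> sc sn P HP.
have := sc _ HP.
rewrite /=. 
apply: filterS2 sn. move=> x H1 H2. exact: H2.
Qed.

Lemma asin_ratio (R : realType) (T : Type) (F : set_system T) (FF : Filter F) (s : T -> R) :
  s @ F --> 0 -> (\forall h \near F, s h != 0) ->
  (fun h => (s h)^-1 * asin (s h)) @ F --> (1:R).
Proof.
move=> sc sn.
exact: (cvg_comp _ _ (@to_dnbhs R T F FF s sc sn) (@asin_quot R)).

Qed.

Lemma near_left_explicit (R : realType) (a : R) (P : R -> Prop) :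
  (\forall x \near a^'-, P x) -> exists2 e : R, 0 < e & forall x : R, a - e < x < a -> P x.
Proof.
rewrite near_withinE => /nbhs_ballP [e e0 He]; exists e => // x /andP[x1 x2].
apply: He => //=; rewrite -ball_normE /ball_ /= ger0_norm; lra.
Qed.

Arguments near_left_explicit {R a P}.

Lemma cont_phi (R : realType) (A : set R) (g : R -> R) :
  {within A, continuous g} -> {within A, continuous (fun x => x ^+ 2 + g x ^+ 2)}.
Proof.
move=> gc x.
apply: cvgD.
  have : continuous (fun x : R => x ^+ 2) by exact: (@exprn_continuous R 2).
  by move/continuous_subspaceT => /(_ A x).
exact: (cvg_comp _ _ (gc x) (@exprn_continuous R 2 (g x))).
Qed.

Lemma qq_lt1 (R : realType) (q : R) : 0 < q -> q < 2 -> ((q + 2) / 2) ^+ 2 / 4 < 1.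
Proof. move=> *. nra. Qed.

Section Core.
Variables (R : realType) (a nu q : R) (gg X : R -> R).
Hypotheses (Hnu : 0 <= nu) (Hnua : nu < a) (Hq0 : 0 < q) (Hq2 : q < 2)
 (Hc : {within `[nu, a], continuous gg})
 (Hlim : (fun x => gg x / fa a x) @ a^'- --> q)
 (HX : \forall h \near (0:R)^'+, forall x, nu <= x <= a ->
          x ^+ 2 + (gg x) ^+ 2 = (a - h) ^+ 2 -> X h = x).

Lemma ratio_near : exists2 e : R, 0 < e &
  forall x : R, a - e < x < a -> q / 2 < gg x / fa a x < (q + 2) / 2.
Proof.
have ep : 0 < q * (2 - q) / 4 by rewrite divr_gt0 // mulr_gt0 // subr_gt0.
have [e e0 He] := near_left_explicit (proj1 (cvgrPdist_lt _ _) Hlim _ ep).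
exists e => // x /He.
rewrite ltr_distlC => /andP[h1 h2]; apply/andP; split; nra.
Qed.

Lemma fa_gt0 x : 0 <= x -> x < a -> 0 < fa a x.
Proof. by move=> x0 xa; rewrite /fa divr_gt0 // sqrtr_gt0 subr_gt0; nra. Qed.

Lemma fa_sqr x : 0 <= x -> x < a -> (fa a x) ^+ 2 = (a ^+ 2 - x ^+ 2) / 4.
Proof.
move=> x0 xa; rewrite /fa expr_div_n sqr_sqrtr; first by congr (_ / _); ring.
rewrite subr_ge0; nra.
Qed.

Lemma stepA (d : R) : 0 < d -> \forall h \near (0:R)^'+,
  [/\ a - d < X h, X h < a, nu <= X h & X h ^+ 2 + gg (X h) ^+ 2 = (a - h) ^+ 2].
Proof.
move=> d0.
have hnu := Hnu; have hnua := Hnua; have hq0 := Hq0; have hq2 := Hq2.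
have [e e0 He] := ratio_near.
set mm := Num.min (Num.min e d) (a - nu).
have m1 : mm <= e by rewrite /mm !ge_min lexx.
have m2 : mm <= d by rewrite /mm !ge_min lexx orbT.
have m3 : mm <= a - nu by rewrite /mm !ge_min lexx orbT.
have m0 : 0 < mm by rewrite /mm !lt_min e0 d0 subr_gt0 Hnua.
set x0 := a - mm / 2.
have hx0 : a - e < x0 < a by apply/andP; split; rewrite /x0; lra.
have x0nu : nu < x0 by rewrite /x0; lra.
have x0d : a - d < x0 by rewrite /x0; lra.
have fa0 := fa_gt0 _ (ltW (le_lt_trans Hnu x0nu)) (proj2 (andP hx0)).
have fs := fa_sqr _ (ltW (le_lt_trans Hnu x0nu)) (proj2 (andP hx0)).
have /andP[r1 r2] := He _ hx0.
set rho := gg x0 / fa a x0 in r1 r2.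
have ggx0 : gg x0 = rho * fa a x0 by rewrite /rho divfK // gt_eqF.
clearbody rho.
set A := a ^+ 2 - x0 ^+ 2 in fs.
have x00 : 0 < x0 by lra.
have x0a : x0 < a by case/andP: hx0.
have A0 : 0 < A by rewrite /A subr_gt0; nra.
set D := A * (1 - ((q + 2) / 2) ^+ 2 / 4).
have D0 : 0 < D.
  rewrite /D; apply: mulr_gt0 => //. rewrite subr_gt0. exact: qq_lt1.
have phix0 : x0 ^+ 2 + gg x0 ^+ 2 < a ^+ 2 - D.
  have rq : 0 < ((q + 2) / 2) ^+ 2 - rho ^+ 2.
    rewrite subr_gt0 ltrXn2r //; lra.
  have := mulr_gt0 rq A0.
  have AE : A = a ^+ 2 - x0 ^+ 2 by [].
  rewrite ggx0 [(rho * _) ^+ 2]exprMn fs /D => H; clearbody A; lra.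
have a0 : 0 < a by lra.
move: HX; apply: filter_app; near=> h => HXh.
have h0 : 0 < h by near: h; exact: nbhs_right_gt.
have ha : h < a by near: h; exact: nbhs_right_lt.
have hD : h < D / (2 * a) by near: h; apply: nbhs_right_lt; rewrite divr_gt0 // mulr_gt0.
have hD' : 2 * a * h < D.
  by move: hD; rewrite ltr_pdivlMr ?mulr_gt0 //; lra.
have x0a' : x0 <= a by lra.
have gc : {within `[x0, a], continuous gg}.
  apply: continuous_subspaceW Hc => y; rewrite /= !in_itv /= => /andP[y1 y2].
  by apply/andP; split; lra.
have ga := sqr_ge0 (gg a).
have [c /[!in_itv] /= /andP[c1 c2] phic] :=
  @IVT R (fun x => x ^+ 2 + gg x ^+ 2) x0 a ((a - h) ^+ 2) x0a' (cont_phi _ _ _ gc)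
    ltac:(apply/andP; split; [rewrite ge_min; apply/orP; left | rewrite le_max; apply/orP; right]; nra).
have Xc : X h = c by apply: HXh => //; apply/andP; split; lra.
rewrite Xc; split => //; try lra.
rewrite lt_neqAle c2 andbT; apply/negP => /eqP ca.
move: phic; rewrite ca => phia; nra.
Unshelve. all: by end_near. Qed.

Lemma rho_cvg : (fun h => gg (X h) / fa a (X h)) @ (0:R)^'+ --> q.
Proof.
apply/cvgrPdist_lt => eps eps0.
have [e e0 He] := near_left_explicit (proj1 (cvgrPdist_lt _ _) Hlim _ eps0).
apply: filterS (stepA _ e0) => h [h1 h2 _ _].
by apply: He; apply/andP; split.
Qed.

Let rho h := gg (X h) / fa a (X h).
Let G h := rho h * Num.sqrt ((2 * a - h) / (4 - rho h ^+ 2)) / (a - h).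
Let G0 := q * Num.sqrt ((2 * a) / (4 - q ^+ 2)) / a.

Lemma G_cvg : G @ (0:R)^'+ --> G0.
Proof.
have hnu := Hnu; have hnua := Hnua; have hq0 := Hq0; have hq2 := Hq2.
have hc : (fun h : R => h) @ (0:R)^'+ --> (0:R) by apply: cvg_at_right_filter; exact: cvg_id.
have rc := rho_cvg.
rewrite /G /G0.
apply: cvgM; last first.
  apply: cvgV; first by rewrite gt_eqF //; lra.
  by rewrite -[X in _ --> X]subr0; apply: cvgB => //; exact: cvg_cst.
apply: cvgM => //.
apply: (cvg_comp (fun h => (2 * a - h) / (4 - rho h ^+ 2)) (@Num.sqrt R) _
  (@sqrt_continuous R ((2 * a) / (4 - q ^+ 2)))).
apply: cvgM.
  by rewrite -[X in _ --> X]subr0; apply: cvgB => //; exact: cvg_cst.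
apply: cvgV; first by rewrite subr_eq0 gt_eqF //; nra.
apply: cvgB; first exact: cvg_cst.
exact: (cvg_comp _ _ rc (@exprn_continuous R 2 q)).
Qed.

Let s h := gg (X h) / (a - h).

Lemma stepC : \forall h \near (0:R)^'+,
  [/\ 0 < X h, 0 < s h < 1, X h ^+ 2 + ((a - h) * s h) ^+ 2 = (a - h) ^+ 2 &
      s h = G h * Num.sqrt h].
Proof.
have hnu := Hnu; have hnua := Hnua; have hq0 := Hq0; have hq2 := Hq2.
have a0 : 0 < a by lra.
have [e e0 He] := ratio_near.
have d0 : 0 < Num.min e (a / 2) by rewrite lt_min e0 divr_gt0.
have d1 : Num.min e (a / 2) <= e by rewrite ge_min lexx.
have d2 : Num.min e (a / 2) <= a / 2 by rewrite ge_min lexx orbT.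
move: (stepA _ d0); apply: filter_app; near=> h => -[A1 A2 A3 A4].
have h0 : 0 < h by near: h; exact: nbhs_right_gt.
have ha : h < a by near: h; exact: nbhs_right_lt.
have r0 : 0 < a - h by lra.
have x0 : 0 < X h by lra.
have /andP[rh1 rh2] : q / 2 < rho h < (q + 2) / 2 by apply: He; apply/andP; split; lra.
have fa0 := fa_gt0 _ (ltW x0) A2.
have fs := fa_sqr _ (ltW x0) A2.
have ggx : gg (X h) = rho h * fa a (X h) by rewrite /rho divfK // gt_eqF.
have y0 : 0 < gg (X h) by rewrite ggx mulr_gt0 //; lra.
have E : gg (X h) ^+ 2 = rho h ^+ 2 * ((a ^+ 2 - ((a - h) ^+ 2 - gg (X h) ^+ 2)) / 4).
  by rewrite {1}ggx exprMn fs -A4 addrK.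
have r4 : 0 < 4 - rho h ^+ 2 by nra.
have Y2 : gg (X h) ^+ 2 = rho h ^+ 2 * ((2 * a - h) / (4 - rho h ^+ 2)) * h.
  apply: (mulIf (x := 4 - rho h ^+ 2)); first by rewrite gt_eqF.
  have -> : rho h ^+ 2 * ((2 * a - h) / (4 - rho h ^+ 2)) * h * (4 - rho h ^+ 2) =
    rho h ^+ 2 * (2 * a - h) * h by field; rewrite gt_eqF.
  move: E; set y := gg (X h); set p := rho h => E; lra.
have K0 : 0 <= (2 * a - h) / (4 - rho h ^+ 2) by rewrite divr_ge0 //; lra.
have Yeq : gg (X h) = rho h * Num.sqrt ((2 * a - h) / (4 - rho h ^+ 2)) * Num.sqrt h.
  have p0 : 0 <= rho h by lra.
  rewrite -[LHS](ger0_norm (ltW y0)) -sqrtr_sqr Y2.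
  rewrite (sqrtrM _ (mulr_ge0 (sqr_ge0 _) K0)) (sqrtrM _ (sqr_ge0 _)).
  by rewrite sqrtr_sqr (ger0_norm p0).
split => //.
- apply/andP; split; first by rewrite /s divr_gt0.
  rewrite /s ltr_pdivrMr // mul1r; nra.
- by rewrite /s mulrC divfK ?gt_eqF.
- by rewrite /s Yeq /G mulrAC.
Unshelve. all: by end_near. Qed.

Lemma s_cvg0 : s @ (0:R)^'+ --> (0:R).
Proof.
have hc : (fun h : R => h) @ (0:R)^'+ --> (0:R) by apply: cvg_at_right_filter; exact: cvg_id.
have sq : (fun h => Num.sqrt h) @ (0:R)^'+ --> (0:R).
  rewrite -[X in _ --> X]sqrtr0.
  exact: (cvg_comp (fun h => h) (@Num.sqrt R) hc (@sqrt_continuous R 0)).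
have H : (fun h => G h * Num.sqrt h) @ (0:R)^'+ --> G0 * 0 by apply: cvgM => //; exact: G_cvg.
rewrite mulr0 in H.
apply: (cvg_trans _ H); apply: near_eq_cvg.
by apply: filterS stepC => h [_ _ _ ->].
Qed.

Lemma tauE : tau q a = G0.
Proof.
have hnu := Hnu; have hnua := Hnua; have hq0 := Hq0; have hq2 := Hq2.
have a0 : 0 < a by lra.
have q4 : 0 < 4 - q ^+ 2 by nra.
rewrite /tau /cconst /G0 [Num.sqrt (2 * a / _)]sqrtrM; last lra.
rewrite sqrtrV; last lra.
have : Num.sqrt (4 - q ^+ 2) != 0 by rewrite sqrtr_eq0 -ltNge.
move=> H; field; rewrite H andbT gt_eqF //.
Qed.

Lemma main_core : (fun h => asin (s h) / (tau q a * Num.sqrt h)) @ (0:R)^'+ --> (1:R).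
Proof.
have hnu := Hnu; have hnua := Hnua; have hq0 := Hq0; have hq2 := Hq2.
have a0 : 0 < a by lra.
have q4 : 0 < 4 - q ^+ 2 by nra.
have G00 : 0 < G0.
  by rewrite /G0 divr_gt0 // mulr_gt0 // sqrtr_gt0 divr_gt0 //; lra.
have t0 : tau q a != 0 by rewrite tauE gt_eqF.
have R1 : (fun h => s h / (tau q a * Num.sqrt h)) @ (0:R)^'+ --> (1:R).
  have H : (fun h => G h * (tau q a)^-1) @ (0:R)^'+ --> G0 * (tau q a)^-1.
    by apply: cvgM; [exact: G_cvg | exact: cvg_cst].
  have E1 : G0 * (tau q a)^-1 = 1 by rewrite tauE mulfV ?gt_eqF.
  rewrite E1 in H.
  apply: (cvg_trans _ H); apply: near_eq_cvg.
  move: stepC; apply: filter_app; near=> h => -[_ _ _ ->].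
  have h0 : 0 < h by near: h; exact: nbhs_right_gt.
  have sh0 : Num.sqrt h != 0 by rewrite gt_eqF // sqrtr_gt0.
  by field; rewrite t0 sh0.
have sn : \forall h \near (0:R)^'+, s h != 0.
  by apply: filterS stepC => h [_ /andP[s0 _] _ _]; rewrite gt_eqF.
have R2 := asin_ratio _ _ _ _ _ s_cvg0 sn.
have H : (fun h => ((s h)^-1 * asin (s h)) * (s h / (tau q a * Num.sqrt h))) @ (0:R)^'+
   --> (1:R) * 1 by apply: cvgM; [exact: R2 | exact: R1].
rewrite mulr1 in H.
apply: (cvg_trans _ H); apply: near_eq_cvg.
apply: filterS sn => h sh.
by rewrite /= -mulrA mulrCA mulKf.
Unshelve. all: by end_near. Qed.

End Core.

Arguments polar_cases {R r s X}.

Lemma finish (R : realType) (a nu q : R) (gg X E : R -> R) :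
  0 <= nu -> nu < a -> 0 < q -> q < 2 ->
  {within `[nu, a], continuous gg} ->
  (fun x => gg x / fa a x) @ a^'- --> q ->
  (\forall h \near (0:R)^'+, forall x, nu <= x <= a ->
          x ^+ 2 + (gg x) ^+ 2 = (a - h) ^+ 2 -> X h = x) ->
  (\forall h \near (0:R)^'+, 0 < h -> h < a -> 0 < X h -> 0 < gg (X h) / (a - h) < 1 ->
     X h ^+ 2 + ((a - h) * (gg (X h) / (a - h))) ^+ 2 = (a - h) ^+ 2 ->
     E h = asin (gg (X h) / (a - h))) ->
  (fun h => E h / (tau q a * Num.sqrt h)) @ (0:R)^'+ --> (1:R).
Proof.
move=> Hnu Hnua Hq0 Hq2 Hc Hlim HX HE.
have M := main_core _ _ _ _ _ _ Hnu Hnua Hq0 Hq2 Hc Hlim HX.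
apply: (cvg_trans _ M); apply: near_eq_cvg.
move: (stepC _ _ _ _ _ _ Hnu Hnua Hq0 Hq2 Hc Hlim HX); apply: filter_app.
move: HE; apply: filter_app.
near=> h => HEh [C1 C2 C3 C4].
have h0 : 0 < h by near: h; exact: nbhs_right_gt.
have ha : h < a by near: h; apply: nbhs_right_lt; lra.
by rewrite /= HEh.
Unshelve. all: by end_near. Qed.

Lemma xbar_uniq (R : realType) (g : R -> R) (lo hi a h x : R) :
  h < a -> lo <= x <= hi -> x ^+ 2 + g x ^+ 2 = (a - h) ^+ 2 ->
  (exists! p, (graph g lo hi `&` bdry (Bdisk a h)) p) -> xbar g lo hi a h = x.
Proof.
move=> ha hx hc [p [_ Hu]].
have Px : (graph g lo hi `&` bdry (Bdisk a h)) (x, g x).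
  split; first by split.
  apply: circle_bdry => //; apply: eucl_r => //; lra.
rewrite /xbar; apply: xget_unique => // y Py.
have e1 := Hu _ Px; have e2 := Hu _ Py.
by move: e2; rewrite e1 => -[->].
Qed.

Lemma Bh_eq (R : realType) (a h x y : R) : 0 <= y ->
  x ^+ 2 + y ^+ 2 = (a - h) ^+ 2 -> Bh a h x = y /\ Bh a h (- x) = y.
Proof.
move=> y0 H; rewrite /Bh sqrrN.
have -> : (a - h) ^+ 2 - x ^+ 2 = y ^+ 2 by rewrite -H; ring.
by rewrite sqrtr_sqr ger0_norm.
Qed.

Arguments Bh_eq {R a h x y}.

Theorem lemma2 (R : realType) (f : R * R -> R) (E : set (R * R)) (a nu : R)
  (g1 g2 g3 g4 : R -> R) (q1 q2 q3 q4 : R) :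
  standing f E a nu g1 g2 g3 g4 q1 q2 q3 q4 ->
  [/\ (fun h => eta_up g1 nu a a h / (tau q1 a * Num.sqrt h)) @ 0^'+ --> (1 : R),
      (fun h => (pi - eta_up g2 (- a) (- nu) a h) / (tau q2 a * Num.sqrt h))
        @ 0^'+ --> (1 : R),
      (fun h => (eta_down g3 (- a) (- nu) a h - pi) / (tau q3 a * Num.sqrt h))
        @ 0^'+ --> (1 : R) &
      (fun h => (2 * pi - eta_down g4 nu a a h) / (tau q4 a * Num.sqrt h))
        @ 0^'+ --> (1 : R)].
Proof.
move=> [_ [[a0 _ _ _] [_ [_ [[[nu0 nua] [c1 c4] _ _ _] [[[c2 c3] _ _ _]
  [[[/andP[q10 q12] /andP[q20 q22] /andP[q30 q32] /andP[q40 q42]] l1 l4 l2 l3] [A6 _]]]]]]]].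
have HU : \forall h \near (0:R)^'+, h < a /\
   [/\ exists! p, (graph g1 nu a `&` bdry (Bdisk a h)) p,
       exists! p, (graph g2 (- a) (- nu) `&` bdry (Bdisk a h)) p,
       exists! p, (graph g3 (- a) (- nu) `&` bdry (Bdisk a h)) p &
       exists! p, (graph g4 nu a `&` bdry (Bdisk a h)) p].
  by apply: filterS2 (nbhs_right_lt a0) A6 => h ha [_ U]; split.
have pi0 := @pi_gt0 R.
split.
- apply: (@finish R a nu q1 g1 (fun h => xbar g1 nu a a h) (fun h => eta_up g1 nu a a h)) => //.
  + apply: filterS HU => h [ha [U1 _ _ _]] x hx hc.
    exact: xbar_uniq.
  + apply: nearW => h h0 ha X0 s01 C.
    have r0 : 0 < a - h by lra.
    have [B1 _] := Bh_eq (ltW (mulr_gt0 r0 (proj1 (andP s01)))) C.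
    rewrite /eta_up /= B1.
    by have [-> _ _ _] := polar_cases r0 s01 X0 C.
- apply: (@finish R a nu q2 (fun x => g2 (- x)) (fun h => - xbar g2 (- a) (- nu) a h)
     (fun h => pi - eta_up g2 (- a) (- nu) a h)) => //.
  + exact: (@within_continuous_compN _ _ _ g2 nu a c2).
  + apply/cvg_at_leftNP.
    rewrite (_ : _ \o _ = fun x => g2 x / fa a x) //.
    by apply: funext => x /=; rewrite opprK /fa sqrrN.
  + apply: filterS HU => h [ha [_ U2 _ _]] x hx hc.
    rewrite (@xbar_uniq R g2 (- a) (- nu) a h (- x)) ?opprK ?sqrrN //.
    by rewrite !lerN2 andbC.
  + apply: nearW => h h0 ha X0 s01 C.
    have r0 : 0 < a - h by lra.
    have [_ B2] := Bh_eq (ltW (mulr_gt0 r0 (proj1 (andP s01)))) C.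
    rewrite /eta_up /=.
    rewrite -[xbar g2 _ _ _ _]opprK B2.
    have [_ -> _ _] := polar_cases r0 s01 X0 C; rewrite !opprK; ring.
- apply: (@finish R a nu q3 (fun x => - g3 (- x)) (fun h => - xbar g3 (- a) (- nu) a h)
     (fun h => eta_down g3 (- a) (- nu) a h - pi)) => //.
  + move=> x; apply: cvgN; exact: (@within_continuous_compN _ _ _ g3 nu a c3 x).
  + apply/cvg_at_leftNP.
    rewrite (_ : _ \o _ = fun x => - g3 x / fa a x) //.
    by apply: funext => x /=; rewrite opprK /fa sqrrN.
  + apply: filterS HU => h [ha [_ _ U3 _]] x hx hc.
    rewrite (@xbar_uniq R g3 (- a) (- nu) a h (- x)) ?opprK //.
      by rewrite !lerN2 andbC.
    by rewrite sqrrN -[g3 _ ^+ 2]sqrrN.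
  + apply: nearW => h h0 ha X0 s01 C.
    have r0 : 0 < a - h by lra.
    have [_ B2] := Bh_eq (ltW (mulr_gt0 r0 (proj1 (andP s01)))) C.
    rewrite /eta_down /=.
    rewrite -[xbar g3 _ _ _ _]opprK B2.
    have [_ _ -> _] := polar_cases r0 s01 X0 C; rewrite !opprK; ring.
- apply: (@finish R a nu q4 (fun x => - g4 x) (fun h => xbar g4 nu a a h)
     (fun h => 2 * pi - eta_down g4 nu a a h)) => //.
  + move=> x; apply: cvgN; exact: (c4 x).
  + apply: filterS HU => h [ha [_ _ _ U4]] x hx hc.
    apply: xbar_uniq => //.
    by rewrite -[g4 _ ^+ 2]sqrrN.
  + apply: nearW => h h0 ha X0 s01 C.
    have r0 : 0 < a - h by lra.
    have [B1 _] := Bh_eq (ltW (mulr_gt0 r0 (proj1 (andP s01)))) C.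
    rewrite /eta_down /= B1.
    have [_ _ _ ->] := polar_cases r0 s01 X0 C; ring.
Unshelve. all: by end_near. Qed.
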